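(* Let $\mathbb{Q}$ be the rationals and $A,B\subseteq\mathbb{Q}$. The following are equivalent: (i) the crisp context $(A,B,\leq)$ is a reduct of $(\mathbb{Q},\mathbb{Q},\leq)$ in FCA; (ii) the crisp context $(A,B,\not\leq)$ is a reduct of $(\mathbb{Q},\mathbb{Q},\not\leq)$ in RST; (iii) both $A$ and $B$ are dense in $\mathbb{Q}$ (with respect to the usual order topology, i.e. each meets every nonempty open interval of $\mathbb{Q}$).
   Context: Crisp contexts are $L$-contexts for $L=\{0,1\}$ with $*=\wedge$; a context is a triple $(X,Y,R)$ with $R\subseteq X\times Y$, and subsets of $X$ are identified with maps $X\to\{0,1\}$. $(A,B,\le)$ denotes $(A,B,R)$ with $R=\{(a,b)\in A\times B\mid a\le b\}$, and $\not\le$ its complement. For $U\subseteq X$, $V\subseteq Y$: $R^\uparrow U=\{y\mid\forall x\in U,(x,y)\in R\}$, $R^\downarrow V=\{x\mid\forall y\in V,(x,y)\in R\}$, $R^\exists U=\{y\mid\exists x\in U,(x,y)\in R\}$, $R^\forall V=\{x\mid\forall y,(x,y)\in R\Rightarrow y\in V\}$. $\mathcal{M}R=\{U\mid R^\downarrow R^\uparrow U=U\}$, $\mathcal{K}R=\{U\mid R^\forall R^\exists U=U\}$. For $X'\subseteq X$, $Y'\subseteq Y$, $R_{X',Y'}=R\cap(X'\times Y')$. $(X',Y',R_{X',Y'})$ is a reduct of $(X,Y,R)$ in FCA if the map $\mathcal{M}R_{X',Y'}\to\mathcal{M}R$, $U'\mapsto R^\downarrow R^\uparrow U'$, is an order isomorphism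 (with respect to inclusion); it is a reduct in RST if the map $\mathcal{K}R_{X',Y'}\to\mathcal{K}R$, $U'\mapsto R^\forall R^\exists U'$, is an order isomorphism. *)

(* Defs.v *)
From mathcomp Require Import all_boot all_order all_algebra.
Set Implicit Arguments. Unset Strict Implicit. Unset Printing Implicit Defensive.
Import Order.TTheory GRing.Theory Num.Theory.

(* A crisp context (X, Y, R): X : objects, Y : attributes (as subsets of
   ambient types T, S), R : incidence relation. *)

Definition subset {T : Type} (U V : T -> Prop) : Prop := forall x, U x -> V x.

Definition restr {T S : Type} (X : T -> Prop) (Y : S -> Prop) (R : T -> S -> Prop)
  : T -> S -> Prop := fun x y => X x /\ Y y /\ R x y.

Definition up {T S : Type} (X : T -> Prop) (Y : S -> Prop) (R : T -> S -> Prop)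
  (U : T -> Prop) : S -> Prop := fun y => Y y /\ forall x, X x -> U x -> R x y.
Definition down {T S : Type} (X : T -> Prop) (Y : S -> Prop) (R : T -> S -> Prop)
  (V : S -> Prop) : T -> Prop := fun x => X x /\ forall y, Y y -> V y -> R x y.
Definition exi {T S : Type} (X : T -> Prop) (Y : S -> Prop) (R : T -> S -> Prop)
  (U : T -> Prop) : S -> Prop := fun y => Y y /\ exists x, X x /\ U x /\ R x y.
Definition allop {T S : Type} (X : T -> Prop) (Y : S -> Prop) (R : T -> S -> Prop)
  (V : S -> Prop) : T -> Prop := fun x => X x /\ forall y, Y y -> R x y -> V y.

Definition inM {T S : Type} (X : T -> Prop) (Y : S -> Prop) (R : T -> S -> Prop)
  (U : T -> Prop) : Prop := subset U X /\ down X Y R (up X Y R U) = U.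
Definition inK {T S : Type} (X : T -> Prop) (Y : S -> Prop) (R : T -> S -> Prop)
  (U : T -> Prop) : Prop := subset U X /\ allop X Y R (exi X Y R U) = U.

Definition order_iso {T : Type} (P1 P2 : (T -> Prop) -> Prop)
  (f : (T -> Prop) -> (T -> Prop)) : Prop :=
  (forall U, P1 U -> P2 (f U)) /\
  (forall U1 U2, P1 U1 -> P1 U2 -> (subset U1 U2 <-> subset (f U1) (f U2))) /\
  (forall W, P2 W -> exists2 U, P1 U & f U = W).

Definition reduct_FCA {T S : Type} (X : T -> Prop) (Y : S -> Prop)
  (R : T -> S -> Prop) (X' : T -> Prop) (Y' : S -> Prop) : Prop :=
  order_iso (inM X' Y' (restr X' Y' R)) (inM X Y R)
            (fun U' => down X Y R (up X Y R U')).

Definition reduct_RST {T S : Type} (X : T -> Prop) (Y : S -> Prop)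
  (R : T -> S -> Prop) (X' : T -> Prop) (Y' : S -> Prop) : Prop :=
  order_iso (inK X' Y' (restr X' Y' R)) (inK X Y R)
            (fun U' => allop X Y R (exi X Y R U')).

Definition dense_rat (A : rat -> Prop) : Prop :=
  forall a b : rat, (a < b)%R -> exists x, A x /\ (a < x)%R /\ (x < b)%R.

Definition fullset {T : Type} : T -> Prop := fun _ => True.
Definition rle : rat -> rat -> Prop := fun x y => (x <= y)%R.
Definition rnle : rat -> rat -> Prop := fun x y => ~ (x <= y)%R.

(* Main.v *)
Require Import Defs.
From mathcomp Require Import all_boot all_order all_algebra.
From mathcomp Require Import lra.
From Stdlib Require Import Classical FunctionalExtensionality PropExtensionality.
Set Implicit Arguments. Unset Strict Implicit. Unset Printing Implicit Defensive.
Import Order.TTheory GRing.Theory Num.Theory.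
Local Open Scope ring_scope.

Lemma pext {T : Type} (P Q : T -> Prop) : (forall x, P x <-> Q x) -> P = Q.
Proof.
move=> h; apply: functional_extensionality => x; apply: propositional_extensionality; exact: h.
Qed.

Lemma lt_nle (x y : rat) : y < x -> ~ x <= y.
Proof. by move=> h; apply/negP; rewrite -ltNge. Qed.
Lemma nle_lt (x y : rat) : ~ x <= y -> y < x.
Proof. by move=> h; rewrite ltNge; apply/negP. Qed.

Lemma eq_closure (X Y : rat -> Prop) (R1 R2 : rat -> rat -> Prop) :
  (forall x y, X x -> Y y -> (R1 x y <-> x <= y)) ->
  (forall x y, X x -> Y y -> (R2 x y <-> ~ x <= y)) ->
  forall U, down X Y R1 (up X Y R1 U) = allop X Y R2 (exi X Y R2 U).
Proof.
move=> h1 h2 U; apply: pext => x; split.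
- move=> [Xx H]; split=> // y Yy R2xy; split=> //.
  apply: NNPP => hn.
  have : R1 x y.
    apply: H => //; split=> // u Xu Uu.
    apply/(h1 _ _ Xu Yy).
    have [//|lt] := leP u y.
    by exfalso; apply: hn; exists u; split=> //; split=> //; apply/(h2 _ _ Xu Yy); apply: lt_nle.
  move/(h1 _ _ Xx Yy) => le.
  by move/(h2 _ _ Xx Yy): R2xy.
- move=> [Xx H]; split=> // y Yy [_ Hub].
  apply/(h1 _ _ Xx Yy).
  have [//|lt] := leP x y.
  have [_ [u [Xu [Uu R2uy]]]] : exi X Y R2 U y.
    by apply: H => //; apply/(h2 _ _ Xx Yy); apply: lt_nle.
  exfalso; move/(h2 _ _ Xu Yy): R2uy; apply.
  by apply/(h1 _ _ Xu Yy); apply: Hub.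
Qed.

Lemma FCA_RST (A B : rat -> Prop) :
  reduct_FCA fullset fullset rle A B = reduct_RST fullset fullset rnle A B.
Proof.
have e1 : forall U, down A B (restr A B rle) (up A B (restr A B rle) U) =
   allop A B (restr A B rnle) (exi A B (restr A B rnle) U).
  apply: eq_closure => x y Xx Yy; rewrite /restr /rle /rnle; split; by [case=> _ [] | ].
have e2 : forall U, down fullset fullset rle (up fullset fullset rle U) =
   allop fullset fullset rnle (exi fullset fullset rnle U).
  by apply: eq_closure => x y _ _; rewrite /rle /rnle.
rewrite /reduct_FCA /reduct_RST.
have -> : inM A B (restr A B rle) = inK A B (restr A B rnle).
  by apply: pext => U; rewrite /inM /inK e1.
have -> : inM fullset fullset rle = inK fullset fullset rnle.
  by apply: pext => U; rewrite /inM /inK e2.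
have -> : (fun U' => down fullset fullset rle (up fullset fullset rle U')) =
   (fun U' => allop fullset fullset rnle (exi fullset fullset rnle U')).
  by apply: functional_extensionality => U; rewrite e2.
by [].
Qed.

Notation CL U := (down fullset fullset rle (up fullset fullset rle U)).
Notation cl A B U := (down A B (restr A B rle) (up A B (restr A B rle) U)).

Lemma CL_spec (U : rat -> Prop) x :
  CL U x <-> forall y, (forall u, U u -> u <= y) -> x <= y.
Proof.
split.
- move=> [_ H] y hy; apply: H => //; split=> // u _; exact: hy.
- move=> H; split=> // y _ [_ hy]; apply: H => u Uu; exact: hy.
Qed.

Lemma cl_spec (A B U : rat -> Prop) x :
  cl A B U x <-> A x /\ forall y, B y -> (forall u, A u -> U u -> u <= y) -> x <= y.
Proof.
rewrite /restr /rle; split.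
- move=> [Ax H]; split=> // y By hy.
  have [_ [_ //]] := H y By (conj By (fun u Au Uu => conj Au (conj By (hy u Au Uu)))).
- move=> [Ax H]; split=> // y By [_ hy]; split=> //; split=> //.
  apply: H => // u Au Uu; by have [_ [_ ]] := hy u Au Uu.
Qed.

Lemma CL_ext (U : rat -> Prop) x : U x -> CL U x.
Proof. by move=> Ux; apply/CL_spec => y hy; apply: hy. Qed.

Lemma CL_idem (U : rat -> Prop) : CL (CL U) = CL U.
Proof.
apply: pext => x; rewrite !CL_spec; split.
- move=> H y hy; apply: H => u /CL_spec; apply; exact: hy.
- move=> H y hy; apply: H => u Uu; apply: hy; exact: CL_ext.
Qed.

Lemma CL_le (q : rat) : CL (fun x => x <= q) = (fun x => x <= q).
Proof.
apply: pext => x; rewrite CL_spec; split.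
- by move=> H; apply: H.
- by move=> h y hy; apply: le_trans h (hy q (lexx q)).
Qed.

Lemma FCA_dense (A B : rat -> Prop) :
  reduct_FCA fullset fullset rle A B <-> dense_rat A /\ dense_rat B.
Proof.
split.
- move=> [H1 [H2 H3]]; split.
  + move=> a b ab; apply: NNPP => hn.
    pose q := (a + b) / 2.
    have [U [HUA HUc] HCU] : exists2 U, inM A B (restr A B rle) U & CL U = (fun x => x <= q).
      apply: H3; split; first by [].
      exact: CL_le.
    have : CL U q by rewrite HCU.
    move/CL_spec => /(_ a) h.
    suff : q <= a by rewrite /q; lra.
    apply: h => u Uu.
    have Au := HUA u Uu.
    have uq : u <= q by have := CL_ext Uu; rewrite HCU.
    have [//|au] := leP u a.
    by exfalso; apply: hn; exists u; split=> //; split=> //; rewrite /q in uq; lra.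
  + move=> a b ab; apply: NNPP => hn.
    pose q1 := (2 * a + b) / 3; pose q2 := (a + 2 * b) / 3.
    have [U1 [HUA1 HUc1] HCU1] : exists2 U, inM A B (restr A B rle) U & CL U = (fun x => x <= q1).
      by apply: H3; split; [|exact: CL_le].
    have [U2 [HUA2 HUc2] HCU2] : exists2 U, inM A B (restr A B rle) U & CL U = (fun x => x <= q2).
      by apply: H3; split; [|exact: CL_le].
    have nsub : ~ Defs.subset U2 U1.
      move=> s; have := (proj1 (H2 U2 U1 (conj HUA2 HUc2) (conj HUA1 HUc1)) s q2).
      rewrite HCU1 HCU2 => /(_ (lexx q2)).
      by rewrite /q1 /q2; lra.
    have [u hu] := not_all_ex_not _ _ nsub.
    have [U2u nU1u] := imply_to_and _ _ hu.
    have Au := HUA2 u U2u.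
    have uq2 : u <= q2 by have := CL_ext U2u; rewrite HCU2.
    have : ~ cl A B U1 u by rewrite HUc1.
    rewrite cl_spec => hc.
    have : ~ forall y, B y -> (forall v, A v -> U1 v -> v <= y) -> u <= y.
      by move=> h; apply: hc.
    move/not_all_ex_not => [y hy].
    have [By hy2] := imply_to_and _ _ hy.
    have [hub nuy] := imply_to_and _ _ hy2.
    have yu := nle_lt nuy.
    have ya : y <= a.
      have [//|ay] := leP y a.
      by exfalso; apply: hn; exists y; split=> //; split=> //; rewrite /q2 in uq2; lra.
    have : CL U1 q1 by rewrite HCU1.
    move/CL_spec => /(_ y) h.
    have : q1 <= y by apply: h => v U1v; apply: hub => //; exact: HUA1.
    by rewrite /q1; lra.
- move=> [dA dB]; split; [|split].
  + move=> U _; split; first by [].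
    exact: CL_idem.
  + move=> U1 U2 [HA1 Hc1] [HA2 Hc2]; split.
    * move=> s x /CL_spec H; apply/CL_spec => y hy; apply: H => u U1u; apply: hy; exact: s.
    * move=> s x U1x; rewrite -Hc2; apply/cl_spec; split; first exact: HA1.
      move=> y By hy.
      have := s x (CL_ext U1x); move/CL_spec; apply => u U2u; apply: hy => //; exact: HA2.
  + move=> W [_ HW].
    exists (fun x => A x /\ W x).
    * split; first by move=> x [].
      apply: pext => x; rewrite cl_spec; split.
      - move=> [Ax H]; split=> //; rewrite -HW; apply/CL_spec => z hz.
        have [//|zx] := leP x z.
        have [b [Bb [zb bx]]] := dB _ _ zx.
        have : x <= b by apply: H => // u Au [_ Wu]; apply: le_trans (hz u Wu) (ltW zb).
        by move=> xb; have := lt_le_trans bx xb; rewrite ltxx.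
      - move=> [Ax Wx]; split=> // y By hy; exact: hy.
    * apply: pext => x; rewrite CL_spec; split.
      - move=> H; rewrite -HW; apply/CL_spec => z hz; apply: H => u [_ Wu]; exact: hz.
      - move=> Wx y hy.
        have [//|yx] := leP x y.
        have [a [Aa [ya ax]]] := dA _ _ yx.
        have Wa : W a.
          rewrite -HW; apply/CL_spec => z hz.
          by apply: le_trans (ltW ax) (hz x Wx).
        have := hy a (conj Aa Wa); lra.
Qed.

Theorem mainTheorem9 (A B : rat -> Prop) :
  (reduct_FCA fullset fullset rle A B <-> reduct_RST fullset fullset rnle A B) /\
  (reduct_RST fullset fullset rnle A B <-> dense_rat A /\ dense_rat B).
Proof.
rewrite -FCA_RST; split; first by [].
exact: FCA_dense.
Qed.
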